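(* If $\mathscr{F}=(\Omega,\sqsubseteq,\mathcal{E},\mathcal{A},\mathcal{K},\mathcal{B})$ is an epistemic possibility frame, then for any $\omega\in\Omega$, the family $\{E\in\mathcal{E}\mid\omega\in\mathbf{A}(E)\}$ contains $\Omega$ and is closed under $\cap$ and under $\neg$, where $\neg E=\{\omega\in\Omega\mid\forall\omega'\sqsubseteq\omega,\ \omega'\notin E\}$.
   Context: For a poset $(\Omega,\sqsubseteq)$, let $\downarrow E=\{\omega\mid \omega\sqsubseteq\nu\text{ for some }\nu\in E\}$, $\downarrow\nu=\downarrow\{\nu\}$, $\rho(E)=\{\omega\mid \forall\omega'\sqsubseteq\omega\ \exists\omega''\sqsubseteq\omega'\colon \omega''\in\downarrow E\}$; $\mathcal{RO}(\Omega,\sqsubseteq)=\{E\mid\rho(E)=E\}$, a Boolean algebra under $\subseteq$ with meet $\cap$, join $E\sqcup F=\rho(E\cup F)$, complement $\neg E$ as in the claim. $\max(E)=\{\omega\in E\mid\text{no }\nu\in E\text{ with }\omega\sqsubseteq\nu,\ \nu\not\sqsubseteq\omega\}$. A possibility frame $(\Omega,\sqsubseteq,\mathcal{E})$ has $\mathcal{E}\subseteq\mathcal{RO}(\Omega,\sqsubseteq)$ nonempty, closed under binary $\cap$ and $\neg$; quasi-principal means: for all $E\in\mathcal{E}$, $\omega\in E$, $\omega\in\downarrow\max(E)$. A possibility frame with awareness $(\Omega,\sqsubseteq,\mathcal{E},\mathcal{A})$: $(\Omega,\sqsubseteq,\mathcal{E})$ quasi-principal with maximum element $m$; $\mathcal{A}:\Omega\to\wp(\Omega)$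 with, for all $\omega,\omega',\nu$: $m\in\mathcal{A}(\omega)$; $\nu\in\mathcal{A}(\omega)\Rightarrow\downarrow\nu\in\mathcal{E}$; $\omega'\sqsubseteq\omega\Rightarrow\mathcal{A}(\omega)\subseteq\mathcal{A}(\omega')$; $\nu\notin\mathcal{A}(\omega)\Rightarrow\exists\omega'\sqsubseteq\omega\ \forall\omega''\sqsubseteq\omega'\ \nu\notin\mathcal{A}(\omega'')$; if $\nu\in\mathcal{A}(\omega)$, $E,E'\in\mathcal{E}$ and $\max(E\cap\downarrow\nu)\cup\max(E'\cap\downarrow\nu)\subseteq\mathcal{A}(\omega)$ then $\max((E\sqcup E')\cap\downarrow\nu)\subseteq\mathcal{A}(\omega)$; and $\mathcal{E}$ is closed under $\mathbf{A}$, where $\omega\in\mathbf{A}(E)$ iff $\forall\omega'\sqsubseteq\omega\ \forall\nu\in\mathcal{A}(\omega')$: $\max(E\cap\downarrow\nu)\cup\max(\neg E\cap\downarrow\nu)\subseteq\mathcal{A}(\omega')$. An epistemic possibility frame $(\Omega,\sqsubseteq,\mathcal{E},\mathcal{A},\mathcal{K},\mathcal{B})$ adds $\mathcal{K},\mathcal{B}:\Omega\to\wp(\Omega)$ such that for $\mathcal{R}\in\{\mathcal{K},\mathcal{B}\}$: $\omega'\sqsubseteq\omega\Rightarrow\mathcal{R}(\omega')\subseteq\mathcal{R}(\omega)$; $\mathcal{R}(\omega)\in\mathcal{RO}(\Omega,\sqsubseteq)$; $\nu\in\mathcal{R}(\omega)\Rightarrow\exists\omega'\sqsubseteq\omega\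 \forall\omega''\sqsubseteq\omega'\ \exists\nu'\sqsubseteq\nu\colon\nu'\in\mathcal{R}(\omega'')$; $\omega\in\mathcal{K}(\omega)$; $\mathcal{B}(\omega)\neq\varnothing$; $\mathcal{B}(\omega)\subseteq\mathcal{K}(\omega)$; and $\{\omega\mid\mathcal{R}(\omega)\subseteq E\}\in\mathcal{E}$ for $E\in\mathcal{E}$. *)

(* Defs.v *)
Set Implicit Arguments.

Section PossDefs.
Variable O : Type.
Variable le : O -> O -> Prop.

Definition pset := O -> Prop.
Definition fullset : pset := fun _ => True.
Definition inter (E F : pset) : pset := fun w => E w /\ F w.
Definition union (E F : pset) : pset := fun w => E w \/ F w.
Definition subset (E F : pset) : Prop := forall w, E w -> F w.

Definition down (E : pset) : pset := fun w => exists v, E v /\ le w v.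
Definition downp (v : O) : pset := down (fun x => x = v).
Definition rho (E : pset) : pset :=
  fun w => forall w', le w' w -> exists w'', le w'' w' /\ down E w''.
Definition RO (E : pset) : Prop := rho E = E.
Definition neg (E : pset) : pset := fun w => forall w', le w' w -> ~ E w'.
Definition join (E F : pset) : pset := rho (union E F).
Definition maxs (E : pset) : pset :=
  fun w => E w /\ ~ (exists v, E v /\ le w v /\ ~ le v w).

Definition is_poset : Prop :=
  (forall w, le w w) /\
  (forall a b c, le a b -> le b c -> le a c) /\
  (forall a b, le a b -> le b a -> a = b).

Record poss_frame (Ev : pset -> Prop) : Prop := {
  pf_poset : is_poset;
  pf_RO : forall E, Ev E -> RO E;
  pf_nonempty : exists E, Ev E;
  pf_inter : forall E F, Ev E -> Ev F -> Ev (inter E F);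
  pf_neg : forall E, Ev E -> Ev (neg E)
}.

Definition quasi_principal (Ev : pset -> Prop) : Prop :=
  forall E, Ev E -> forall w, E w -> down (maxs E) w.

Definition Aop (A : O -> pset) (E : pset) : pset :=
  fun w => forall w', le w' w -> forall v, A w' v ->
    subset (union (maxs (inter E (downp v))) (maxs (inter (neg E) (downp v))))
           (A w').

Record awareness_frame (Ev : pset -> Prop) (A : O -> pset) (m : O) : Prop := {
  af_frame : poss_frame Ev;
  af_qp : quasi_principal Ev;
  af_max : forall w, le w m;
  af_m : forall w, A w m;
  af_down : forall w v, A w v -> Ev (downp v);
  af_mono : forall w w', le w' w -> subset (A w) (A w');
  af_refine : forall w v, ~ A w v ->
      exists w', le w' w /\ forall w'', le w'' w' -> ~ A w'' v;
  af_join : forall w v E E', A w v -> Ev E -> Ev E' ->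
      subset (union (maxs (inter E (downp v))) (maxs (inter E' (downp v)))) (A w) ->
      subset (maxs (inter (join E E') (downp v))) (A w);
  af_closedA : forall E, Ev E -> Ev (Aop A E)
}.

Record access_cond (Ev : pset -> Prop) (R : O -> pset) : Prop := {
  ac_mono : forall w w', le w' w -> subset (R w') (R w);
  ac_RO : forall w, RO (R w);
  ac_refine : forall w v, R w v ->
      exists w', le w' w /\ forall w'', le w'' w' ->
        exists v', le v' v /\ R w'' v';
  ac_box : forall E, Ev E -> Ev (fun w => subset (R w) E)
}.

Record epistemic_frame (Ev : pset -> Prop) (A : O -> pset) (m : O)
    (K B : O -> pset) : Prop := {
  ef_aw : awareness_frame Ev A m;
  ef_K : access_cond Ev K;
  ef_B : access_cond Ev B;
  ef_Krefl : forall w, K w w;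
  ef_Bne : forall w, exists v, B w v;
  ef_BK : forall w, subset (B w) (K w)
}.

End PossDefs.

(* Main.v *)
Require Import Defs.
From Stdlib Require Import Classical FunctionalExtensionality PropExtensionality.

Section H.
Variable O : Type.
Variable le : O -> O -> Prop.
Hypothesis refl : forall w, le w w.
Hypothesis trans : forall a b c, le a b -> le b c -> le a c.

Lemma RO_down (E : pset O) : RO le E -> forall w a, E w -> le a w -> E a.
Proof.
  intros HR w a Hw Ha. rewrite <- HR in Hw |- *.
  intros w' h. apply Hw. eauto.
Qed.

Lemma neg_down (E : pset O) : forall w a, neg le E w -> le a w -> neg le E a.
Proof. intros w a Hw Ha w' h. apply Hw. eauto. Qed.

Lemma negneg (E : pset O) : RO le E -> neg le (neg le E) = E.
Proof.
  intros HR. apply functional_extensionality; intro w.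
  apply propositional_extensionality. split.
  - intros H. rewrite <- HR. intros w' h.
    apply NNPP; intro C. apply (H w' h). intros w'' h'' Ew''.
    apply C. exists w''. split; auto. exists w''; auto.
  - intros Ew w' h N. apply (N w' (refl w')). eapply RO_down; eauto.
Qed.

Lemma joinneg (E F : pset O) : RO le E -> RO le F ->
  join le (neg le E) (neg le F) = neg le (inter E F).
Proof.
  intros HE HF. apply functional_extensionality; intro w.
  apply propositional_extensionality. split.
  - intros H w' h [e f].
    destruct (H w' h) as [w'' [h'' [z [hz hz']]]].
    destruct hz as [nz|nz].
    + apply (nz w'' hz'). eapply RO_down; eauto.
    + apply (nz w'' hz'). eapply RO_down; eauto.
  - intros H w' h.
    destruct (classic (neg le E w')) as [nE|nE].
    + exists w'. split; auto. exists w'. split; auto. left; auto.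
    + apply not_all_ex_not in nE. destruct nE as [u nu].
      apply imply_to_and in nu. destruct nu as [hu nu]. apply NNPP in nu.
      destruct (classic (neg le F u)) as [nF|nF].
      * exists u. split; auto. exists u. split; auto. right; auto.
      * apply not_all_ex_not in nF. destruct nF as [t nt].
        apply imply_to_and in nt. destruct nt as [ht nt]. apply NNPP in nt.
        exfalso. apply (H t). eauto. split; auto. eapply RO_down; eauto.
Qed.
End H.

Theorem corollary4p4 (O : Type) (le : O -> O -> Prop) (Ev : pset O -> Prop)
    (A : O -> pset O) (m : O) (K B : O -> pset O) :
  epistemic_frame le Ev A m K B ->
  forall w : O,
    (Ev (@fullset O) /\ Aop le A (@fullset O) w) /\
    (forall E F : pset O,
        Ev E /\ Aop le A E w -> Ev F /\ Aop le A F w ->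
        Ev (inter E F) /\ Aop le A (inter E F) w) /\
    (forall E : pset O,
        Ev E /\ Aop le A E w -> Ev (neg le E) /\ Aop le A (neg le E) w).
Proof.
  intros H w.
  destruct H as [Haw _ _ _ _ _].
  destruct Haw as [Hpf Hqp Hmax Hm Hdown Hmono Href Hjoin HclA].
  destruct Hpf as [[Hrefl [Htrans Hanti]] HRO Hne Hint Hneg].
  split; [|split].
  - split.
    + destruct Hne as [E0 HE0].
      assert (Hz : Ev (neg le (inter E0 (neg le E0)))) by auto.
      replace (@fullset O) with (neg le (inter E0 (neg le E0))); auto.
      apply functional_extensionality; intro x.
      apply propositional_extensionality. split; [intros; exact I|].
      intros _ w' _ [h1 h2]. exact (h2 w' (Hrefl w') h1).
    + intros w' _ v Hv x [Hx|Hx].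
      * destruct Hx as [[_ [v0 [e hx]]] Hnot]; subst v0.
        destruct (classic (le v x)) as [c|c].
        -- rewrite (Hanti x v hx c). exact Hv.
        -- exfalso. apply Hnot. exists v. split.
           ++ split. exact I. exists v; auto.
           ++ auto.
      * destruct Hx as [[hn _] _]. exfalso. exact (hn x (Hrefl x) I).
  - intros E F [HE HAE] [HF HAF]. split; [auto|].
    intros w' hw' v hv x [hx|hx].
    + destruct hx as [[[xE xF] xv] hxmax].
      assert (HEv : Ev (inter E (downp le v))) by (apply Hint; [exact HE | exact (Hdown _ _ hv)]).
      destruct (Hqp _ HEv x (conj xE xv)) as [u [hu xu]].
      assert (hAu : A w' u) by (apply (HAE w' hw' v hv u); left; exact hu).
      apply (HAF w' hw' u hAu x). left. split.
      * split; auto. exists u; auto.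
      * intros [y [[yF [u0 [e yu]]] [xy nyx]]]; subst u0.
        apply hxmax. exists y. split; [|auto].
        destruct hu as [[uE [v0 [e' uv]]] _]; subst v0.
        split; [split|].
        -- eapply RO_down; eauto.
        -- exact yF.
        -- exists v; eauto.
    + rewrite <- (@joinneg O le Hrefl Htrans E F (HRO E HE) (HRO F HF)) in hx.
      apply (Hjoin w' v (neg le E) (neg le F) hv (Hneg E HE) (Hneg F HF)); [|exact hx].
      intros z [hz|hz].
      * apply (HAE w' hw' v hv z); right; exact hz.
      * apply (HAF w' hw' v hv z); right; exact hz.
  - intros E [HE HA]. split; [auto|].
    intros w' hw' v hv x hx.
    rewrite (@negneg O le Hrefl Htrans E (HRO E HE)) in hx.
    apply (HA w' hw' v hv x). destruct hx; [right|left]; auto.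
Qed.
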